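(* Suppose $\mathcal M$ is stable under regular maps. Let \[1\to P \to G \to Q\to 1\] be a short exact sequence of countable groups. Assume $G$ is equipped with a uniformly discrete proper left-invariant metric, and that each finitely generated subgroup of $P$, equipped with the induced metric belongs to $\mathcal M$, and that $Q$ is equipped with the quotient metric. Then $\overline{\operatorname{asdim}}_{\mathcal M}(G)\leq \operatorname{asdim}(Q)$.
   Context: $\mathcal M$ is a class of metric families (collections of $1$-uniformly discrete bounded geometry metric spaces), stable under regular maps (uniformly Lipschitz maps with uniformly bounded preimage cardinalities); a space $X$ belongs to $\mathcal M$ if $\{X\}\in\mathcal M$. $\operatorname{asdim}$ is the usual asymptotic dimension. $\overline{\operatorname{asdim}}_{\mathcal M}(G)$ is the least $d$ such that for every $r$, $G=X_0\cup\dots\cup X_d$ with each $X_i$ a union of pieces pairwise at distance at least $r$, such that, with $\mathcal Z$ the family of pieces, $N^m_s(\mathcal Z)\in\mathcal M$ for all $m,s\geq1$, where $N^0_s(Z)=Z$ and $N^{k+1}_s(Z)$ is the union of all $Z'\in\mathcal Z$ meeting the closed $s$-neighbourhood of $N^k_s(Z)$. *)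

(* Defs.v *)
From Stdlib Require Import Reals List.
Open Scope R_scope.

Record Grp := {
  gcar :> Type;
  gmul : gcar -> gcar -> gcar;
  ginv : gcar -> gcar;
  gone : gcar;
  gmulA : forall x y z, gmul x (gmul y z) = gmul (gmul x y) z;
  gmul1 : forall x, gmul gone x = x;
  gmulV : forall x, gmul (ginv x) x = gone
}.

Definition is_hom (A B : Grp) (f : A -> B) : Prop :=
  forall x y, f (gmul A x y) = gmul B (f x) (f y).
Arguments is_hom {A B} f.

Definition countable (T : Type) : Prop :=
  exists f : T -> nat, forall x y, f x = f y -> x = y.

Inductive gen (A : Grp) (S : list A) : A -> Prop :=
| gen_one : gen A S (gone A)
| gen_in : forall x, In x S -> gen A S x
| gen_mul : forall x y, gen A S x -> gen A S y -> gen A S (gmul A x y)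
| gen_inv : forall x, gen A S x -> gen A S (ginv A x).

Record MetricSpace := { msp_car : Type; msp_dist : msp_car -> msp_car -> R }.
Arguments msp_dist {_}.

Record MFamily := { fam_idx : Type; fam_sp : fam_idx -> MetricSpace }.

Definition is_metric (X : Type) (d : X -> X -> R) : Prop :=
  (forall x y, 0 <= d x y) /\ (forall x y, d x y = 0 <-> x = y) /\
  (forall x y, d x y = d y x) /\ (forall x y z, d x z <= d x y + d y z).
Arguments is_metric {X} d.

(* family of 1-uniformly discrete metric spaces with (uniformly) bounded geometry *)
Definition is_metric_family (F : MFamily) : Prop :=
  (forall i, is_metric (@msp_dist (fam_sp F i))) /\
  (forall i (x y : msp_car (fam_sp F i)), x <> y -> 1 <= msp_dist x y) /\
  (forall r : R, exists K : nat, forall i (x : msp_car (fam_sp F i))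
      (l : list (msp_car (fam_sp F i))),
      NoDup l -> (forall y, In y l -> msp_dist x y <= r) -> (length l <= K)%nat).

Definition regular_map (F' F : MFamily) : Prop :=
  exists (L : R) (K : nat), forall j : fam_idx F', exists i : fam_idx F,
    exists f : msp_car (fam_sp F' j) -> msp_car (fam_sp F i),
      (forall x y, msp_dist (f x) (f y) <= L * msp_dist x y) /\
      (forall y l, NoDup l -> (forall x, In x l -> f x = y) -> (length l <= K)%nat).

Definition stable_under_regular_maps (M : MFamily -> Prop) : Prop :=
  forall F F', M F -> is_metric_family F' -> regular_map F' F -> M F'.

Definition single_family (X : MetricSpace) : MFamily :=
  {| fam_idx := unit; fam_sp := fun _ => X |}.

Definition belongs_to (M : MFamily -> Prop) (X : MetricSpace) : Prop :=
  M (single_family X).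

(* X = X_0 u ... u X_dd, each X_c a union of the pieces Z j with colour c j = c,
   distinct pieces of the same colour at distance >= r. *)
Definition r_decomposition (X : Type) (dist : X -> X -> R) (r : R) (dd : nat)
  (J : Type) (Z : J -> X -> Prop) (c : J -> nat) : Prop :=
  (forall j, (c j <= dd)%nat) /\
  (forall x, exists j, Z j x) /\
  (forall j j', j <> j' -> c j = c j' ->
     forall x y, Z j x -> Z j' y -> r <= dist x y).
Arguments r_decomposition {X} dist r dd {J} Z c.

Definition asdim_prop (X : Type) (dist : X -> X -> R) (dd : nat) : Prop :=
  forall r : R, exists (J : Type) (Z : J -> X -> Prop) (c : J -> nat),
    r_decomposition dist r dd Z c /\
    exists B : R, forall j x y, Z j x -> Z j y -> dist x y <= B.
Arguments asdim_prop {X} dist dd.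

Definition asdim_le (X : Type) (dist : X -> X -> R) (n : nat) : Prop :=
  exists dd, (dd <= n)%nat /\ asdim_prop dist dd.
Arguments asdim_le {X} dist n.

Fixpoint Nks (X : Type) (dist : X -> X -> R) (J : Type) (Z : J -> X -> Prop)
  (s : R) (k : nat) (j : J) : X -> Prop :=
  match k with
  | O => Z j
  | S k' => fun x => exists j', Z j' x /\
      exists z a, Z j' z /\ Nks X dist J Z s k' j a /\ dist z a <= s
  end.
Arguments Nks {X} dist {J} Z s k j.

Definition subspace (X : Type) (dist : X -> X -> R) (A : X -> Prop) : MetricSpace :=
  {| msp_car := {x : X | A x};
     msp_dist := fun a b => dist (proj1_sig a) (proj1_sig b) |}.
Arguments subspace {X} dist A.

Definition N_family (X : Type) (dist : X -> X -> R) (J : Type) (Z : J -> X -> Prop)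
  (m s : nat) : MFamily :=
  {| fam_idx := J; fam_sp := fun j => subspace dist (Nks dist Z (INR s) m j) |}.
Arguments N_family {X} dist {J} Z m s.

Definition asdimM_prop (M : MFamily -> Prop) (X : Type) (dist : X -> X -> R)
  (dd : nat) : Prop :=
  forall r : R, exists (J : Type) (Z : J -> X -> Prop) (c : J -> nat),
    r_decomposition dist r dd Z c /\
    forall m s : nat, (1 <= m)%nat -> (1 <= s)%nat -> M (N_family dist Z m s).
Arguments asdimM_prop M {X} dist dd.

Definition asdimM_le (M : MFamily -> Prop) (X : Type) (dist : X -> X -> R)
  (n : nat) : Prop :=
  exists dd, (dd <= n)%nat /\ asdimM_prop M dist dd.
Arguments asdimM_le M {X} dist n.

Definition uniformly_discrete1 (X : Type) (d : X -> X -> R) : Prop :=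
  forall x y, x <> y -> 1 <= d x y.
Arguments uniformly_discrete1 {X} d.

(* proper (for a uniformly discrete metric): closed balls are finite *)
Definition proper_metric (X : Type) (d : X -> X -> R) : Prop :=
  forall x (r : R), exists l : list X, forall y, d x y <= r -> In y l.
Arguments proper_metric {X} d.

Definition left_invariant (A : Grp) (d : A -> A -> R) : Prop :=
  forall g x y, d (gmul A g x) (gmul A g y) = d x y.
Arguments left_invariant {A} d.

Definition is_quotient_metric (A B : Grp) (pi : A -> B) (d : A -> A -> R)
  (dQ : B -> B -> R) : Prop :=
  forall q1 q2,
    (forall g1 g2, pi g1 = q1 -> pi g2 = q2 -> dQ q1 q2 <= d g1 g2) /\
    (forall e, 0 < e -> exists g1 g2, pi g1 = q1 /\ pi g2 = q2 /\ d g1 g2 < dQ q1 q2 + e).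
Arguments is_quotient_metric {A B} pi d dQ.

Definition fg_subgroup_space (P G : Grp) (i : P -> G) (d : G -> G -> R)
  (S : list P) : MetricSpace :=
  {| msp_car := {p : P | gen P S p};
     msp_dist := fun a b => d (i (proj1_sig a)) (i (proj1_sig b)) |}.

Arguments fg_subgroup_space {P G} i d S.

(* Main.v *)
Require Import Defs.
From Stdlib Require Import Reals List Lra.
From Stdlib Require Import Classical ClassicalEpsilon ProofIrrelevance FunctionalExtensionality PropExtensionality.
Open Scope R_scope.

Lemma mulVr (A : Grp) (x : A) : gmul A x (ginv A x) = gone A.
Proof.
  rewrite <- (gmul1 A (gmul A x (ginv A x))).
  rewrite <- (gmulV A (ginv A x)) at 1.
  rewrite <- gmulA. rewrite (gmulA A (ginv A x) x (ginv A x)).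
  rewrite gmulV, gmul1. apply gmulV.
Qed.

Lemma mulr1 (A : Grp) (x : A) : gmul A x (gone A) = x.
Proof. rewrite <- (gmulV A x), gmulA, mulVr, gmul1. reflexivity. Qed.

Lemma cancel_l (A : Grp) (g x y : A) : gmul A g x = gmul A g y -> x = y.
Proof.
  intro H. apply (f_equal (gmul A (ginv A g))) in H.
  rewrite !gmulA, gmulV, !gmul1 in H. exact H.
Qed.

Lemma cancel_r (A : Grp) (g x y : A) : gmul A x g = gmul A y g -> x = y.
Proof.
  intro H. apply (f_equal (fun t => gmul A t (ginv A g))) in H.
  rewrite <- !gmulA, mulVr, !mulr1 in H. exact H.
Qed.

Lemma hom1 (A B : Grp) (f : A -> B) : is_hom f -> f (gone A) = gone B.
Proof.
  intro Hf. apply (cancel_l B (f (gone A))).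
  rewrite mulr1, <- Hf, gmul1. reflexivity.
Qed.

Lemma homV (A B : Grp) (f : A -> B) : is_hom f -> forall x, f (ginv A x) = ginv B (f x).
Proof.
  intros Hf x. apply (cancel_r B (f x)).
  rewrite <- Hf, !gmulV. apply hom1; auto.
Qed.

Lemma NoDup_map_in {A B} (f : A -> B) (l : list A) : NoDup l ->
  (forall a b, In a l -> In b l -> f a = f b -> a = b) -> NoDup (map f l).
Proof.
  induction 1 as [|a l Ha Hl IH]; intros Hinj; simpl; constructor.
  - intro Hin. apply in_map_iff in Hin. destruct Hin as [b [Hb Hbin]].
    assert (b = a) by (apply Hinj; simpl; auto). subst. contradiction.
  - apply IH. intros; apply Hinj; simpl; auto.
Qed.

Lemma dist_inv_l (G : Grp) (d : G -> G -> R) : left_invariant d ->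
  forall a b, d (gone G) (gmul G (ginv G a) b) = d a b.
Proof.
  intros Hl a b. rewrite <- (Hl a). rewrite mulr1, gmulA, mulVr, gmul1. reflexivity.
Qed.

Lemma dist_inv1 (G : Grp) (d : G -> G -> R) : left_invariant d ->
  forall h, d (ginv G h) (gone G) = d (gone G) h.
Proof.
  intros Hl h. rewrite <- (Hl h). rewrite mulVr, mulr1. reflexivity.
Qed.

Lemma dist_rinv (G : Grp) (d : G -> G -> R) : left_invariant d ->
  forall g h, d (gmul G g (ginv G h)) g = d (gone G) h.
Proof.
  intros Hl g h. rewrite <- (mulr1 G g) at 2. rewrite Hl. apply dist_inv1; auto.
Qed.

Lemma dist_bound (G : Grp) (d : G -> G -> R) : is_metric d -> left_invariant d ->
  forall g h g' h', d (gmul G g (ginv G h)) (gmul G g' (ginv G h')) <=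
    d (gone G) h + d g g' + d (gone G) h'.
Proof.
  intros [H0 [H1 [Hs Ht]]] Hl g h g' h'.
  pose proof (Ht (gmul G g (ginv G h)) g (gmul G g' (ginv G h'))).
  pose proof (Ht g g' (gmul G g' (ginv G h'))).
  rewrite (dist_rinv G d Hl) in *.
  rewrite (Hs g' _), (dist_rinv G d Hl) in *. lra.
Qed.

Inductive chain {X : Type} (Ok : X -> Prop) (rel : X -> X -> Prop) (x : X) : X -> Prop :=
| ch0 : Ok x -> chain Ok rel x x
| chS : forall y z, chain Ok rel x y -> Ok z -> rel y z -> chain Ok rel x z.

Lemma chain_okl {X} Ok rel (x y : X) : chain Ok rel x y -> Ok x.
Proof. induction 1; auto. Qed.
Lemma chain_okr {X} Ok rel (x y : X) : chain Ok rel x y -> Ok y.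
Proof. induction 1; auto. Qed.
Lemma chain_trans {X} Ok rel (x y z : X) : chain Ok rel x y -> chain Ok rel y z -> chain Ok rel x z.
Proof. intros H1 H2. induction H2; auto. eapply chS; eauto. Qed.
Lemma chain_mono {X} (Ok Ok' : X -> Prop) (rel rel' : X -> X -> Prop) x y :
  (forall z, Ok z -> Ok' z) -> (forall a b, rel a b -> rel' a b) ->
  chain Ok rel x y -> chain Ok' rel' x y.
Proof. intros HO HR. induction 1. constructor; auto. eapply chS; eauto. Qed.
Lemma chain_sym {X} Ok (rel : X -> X -> Prop) x y : (forall a b, rel a b -> rel b a) ->
  chain Ok rel x y -> chain Ok rel y x.
Proof.
  intros Hs. induction 1. constructor; auto.
  apply chain_trans with y; auto. eapply chS. constructor; auto. eapply chain_okr; eauto. auto.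
Qed.

Lemma dQ_le (G Q : Grp) (pi : G -> Q) d dQ : is_quotient_metric pi d dQ ->
  forall g1 g2, dQ (pi g1) (pi g2) <= d g1 g2.
Proof. intros H g1 g2. apply (proj1 (H _ _)); auto. Qed.

Lemma dQ_tri (G Q : Grp) (pi : G -> Q) d dQ : is_hom pi -> is_metric d -> left_invariant d ->
  is_quotient_metric pi d dQ ->
  forall q1 q2 q3, dQ q1 q3 <= dQ q1 q2 + dQ q2 q3.
Proof.
  intros Hpi Hd Hl HdQ q1 q2 q3.
  destruct Hd as [_ [_ [_ Ht]]].
  apply Rnot_lt_le; intro H.
  set (e := (dQ q1 q3 - dQ q1 q2 - dQ q2 q3) / 2).
  assert (He : 0 < e) by (unfold e; lra).
  destruct (proj2 (HdQ q1 q2) e He) as [g1 [g2 [E1 [E2 L1]]]].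
  destruct (proj2 (HdQ q2 q3) e He) as [g2' [g3 [E2' [E3 L2]]]].
  set (t := gmul G (gmul G g2 (ginv G g2')) g3).
  assert (Et : pi t = q3).
  { unfold t. rewrite !Hpi, (homV _ _ _ Hpi), E2, E2', mulVr, gmul1. auto. }
  assert (Dt : d g2 t = d g2' g3).
  { unfold t. rewrite <- (Hl (gmul G g2 (ginv G g2')) g2' g3).
    rewrite <- (gmulA G g2 (ginv G g2') g2'), gmulV, mulr1. reflexivity. }
  pose proof (proj1 (HdQ q1 q3) g1 t E1 Et).
  pose proof (Ht g1 g2 t). unfold e in *. lra.
Qed.
Lemma rep_exists (G Q : Grp) (pi : G -> Q) d dQ : is_hom pi -> left_invariant d ->
  is_quotient_metric pi d dQ -> forall x0 y D, dQ (pi x0) (pi y) <= D ->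
  exists h, pi h = pi (gmul G (ginv G x0) y) /\ d (gone G) h <= D + 1.
Proof.
  intros Hpi Hl HdQ x0 y D HD.
  destruct (proj2 (HdQ (pi x0) (pi y)) 1 Rlt_0_1) as [g1 [g2 [E1 [E2 L]]]].
  exists (gmul G (ginv G g1) g2). split.
  - rewrite !Hpi, !(homV _ _ _ Hpi), E1, E2. reflexivity.
  - rewrite (dist_inv_l G d Hl). lra.
Qed.

Lemma preimage_list (P G : Grp) (i : P -> G) : (forall x y, i x = i y -> x = y) ->
  forall Gl : list G, exists W : list P, forall p, In (i p) Gl -> In p W.
Proof.
  intros Hinj. induction Gl as [|g Gl IH].
  - exists nil. simpl; auto.
  - destruct IH as [W HW]. destruct (classic (exists p0, i p0 = g)) as [[p0 Hp0]|Hno].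
    + exists (p0 :: W). intros p [Hp|Hp]; simpl; auto.
      left. apply Hinj. congruence.
    + exists W. intros p [Hp|Hp]; auto. exfalso; apply Hno; eauto.
Qed.

Lemma rep_gen (P G Q : Grp) (i : P -> G) (pi : G -> Q) d dQ
  (Hi : is_hom i) (Hpi : is_hom pi)
  (Hexact : forall g, pi g = gone Q <-> exists p, i p = g)
  (Hd : is_metric d) (Hl : left_invariant d) (HdQ : is_quotient_metric pi d dQ)
  (x0 : G) (D rho : R) (HD : 0 <= D) (Hrho : 0 <= rho) (W : list P)
  (HW : forall p, d (gone G) (i p) <= 2 * (D + 1) + rho -> In p W) :
  forall y, chain (fun z => dQ (pi x0) (pi z) <= D) (fun a b => d a b <= rho) x0 y ->
  forall h p, pi h = pi (gmul G (ginv G x0) y) -> d (gone G) h <= D + 1 ->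
  i p = gmul G (gmul G (ginv G x0) y) (ginv G h) -> gen P W p.
Proof.
  induction 1 as [Hok | y z Hch IH Hokz Hyz]; intros h p Eh Dh Ep.
  - apply gen_in. apply HW. rewrite Ep, gmulV, gmul1.
    destruct Hd as [_ [_ [Hs _]]]. rewrite Hs, (dist_inv1 G d Hl). lra.
  - destruct (rep_exists G Q pi d dQ Hpi Hl HdQ x0 y D (chain_okr _ _ _ _ Hch)) as [hy [Ehy Dhy]].
    destruct (proj1 (Hexact (gmul G (gmul G (ginv G x0) y) (ginv G hy)))) as [py Epy].
    { rewrite Hpi, (homV _ _ _ Hpi), <- Ehy, mulVr. reflexivity. }
    pose proof (IH hy py Ehy Dhy Epy) as Gy.
    assert (Hp : p = gmul P py (gmul P (ginv P py) p)).
    { rewrite gmulA, mulVr, gmul1. reflexivity. }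
    rewrite Hp. apply gen_mul; auto. apply gen_in. apply HW.
    rewrite Hi, (homV _ _ _ Hi), (dist_inv_l G d Hl), Ep, Epy.
    eapply Rle_trans. apply (dist_bound G d Hd Hl).
    rewrite <- (Hl (ginv G x0) y z) in Hyz. lra.
Qed.

Lemma subfam_metric (G : Grp) (d : G -> G -> R) (Hd : is_metric d)
  (Hdisc : uniformly_discrete1 d) (Hproper : proper_metric d) (Hl : left_invariant d)
  (J : Type) (A : J -> G -> Prop) :
  is_metric_family {| fam_idx := J; fam_sp := fun j => subspace d (A j) |}.
Proof.
  destruct Hd as [H0 [H1 [Hs Ht]]].
  split; [|split].
  - intros j. simpl. split; [|split; [|split]].
    + intros; apply H0.
    + intros [x hx] [y hy]; simpl. split.
      * intro E. apply H1 in E. subst. f_equal. apply proof_irrelevance.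
      * intro E. inversion E. apply H1. reflexivity.
    + intros; apply Hs.
    + intros; apply Ht.
  - intros j [x hx] [y hy] Hne; simpl. apply Hdisc. intro E; subst.
    apply Hne. f_equal. apply proof_irrelevance.
  - intros r. destruct (Hproper (gone G) r) as [L HL]. exists (length L).
    intros j [x hx] l Hnd Hb. simpl in *.
    set (phi := fun (y : {z : G | A j z}) => gmul G (ginv G x) (proj1_sig y)).
    rewrite <- (length_map phi l).
    apply NoDup_incl_length.
    + apply NoDup_map_in; auto. intros [a ha] [b hb] _ _ E. unfold phi in E; simpl in E.
      apply cancel_l in E. subst. f_equal. apply proof_irrelevance.
    + intros g Hg. apply in_map_iff in Hg. destruct Hg as [y [Ey Hy]]. subst.
      apply HL. unfold phi. rewrite (dist_inv_l G d Hl). apply (Hb y Hy).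
Qed.
Theorem proposition2p9
  (M : MFamily -> Prop)
  (HMfam : forall F, M F -> is_metric_family F)
  (HMstab : stable_under_regular_maps M)
  (P G Q : Grp) (i : P -> G) (pi : G -> Q)
  (Hi : is_hom i) (Hiinj : forall x y, i x = i y -> x = y)
  (Hpi : is_hom pi) (Hpisurj : forall q, exists g, pi g = q)
  (Hexact : forall g, pi g = gone Q <-> exists p, i p = g)
  (HcP : countable P) (HcG : countable G) (HcQ : countable Q)
  (d : G -> G -> R) (Hd : is_metric d) (Hdisc : uniformly_discrete1 d)
  (Hproper : proper_metric d) (Hleft : left_invariant d)
  (HP : forall S : list P, belongs_to M (fg_subgroup_space i d S))
  (dQ : Q -> Q -> R) (HdQ : is_quotient_metric pi d dQ)
  (n : nat) (Hn : asdim_le dQ n) :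
  asdimM_le M d n.
Proof.
  destruct Hn as [dd [Hdd Hasd]]. exists dd; split; [exact Hdd|]. intro r.
  destruct (Hasd r) as [JQ [U [cQ [[Hc [Hcov Hsep]] [B0 HB0]]]]].
  set (B := Rmax B0 0).
  assert (HBp : 0 <= B) by apply Rmax_r.
  assert (HB : forall j x y, U j x -> U j y -> dQ x y <= B).
  { intros; eapply Rle_trans; [eapply HB0; eauto | apply Rmax_l]. }
  pose proof Hd as Hd'. destruct Hd' as [Hd0 [Hd1 [Hds Hdt]]].
  set (comp := fun j x0 => chain (fun z => U j (pi z)) (fun a b => d a b < r) x0).
  set (J := {p : JQ * (G -> Prop) | exists x0, snd p = comp (fst p) x0}).
  assert (relsym : forall a b, d a b < r -> d b a < r) by (intros a b; rewrite Hds; auto).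
  exists J, (fun p => snd (proj1_sig p)), (fun p => cQ (fst (proj1_sig p))).
  split.
  { split; [|split].
    - intros [[j A] HA]; simpl; apply Hc.
    - intro x. destruct (Hcov (pi x)) as [j Hj].
      exists (exist _ (j, comp j x) (ex_intro _ x eq_refl)). simpl. constructor. exact Hj.
    - intros [[j A] [x0 HA]] [[j' A'] [x1 HA']] Hne Hcol x y Hx Hy. simpl in *. subst A A'.
      destruct (classic (j = j')) as [E|E].
      + subst j'. apply Rnot_lt_le. intro Hlt. apply Hne.
        assert (C0y : comp j x0 y) by (eapply chS; [exact Hx | exact (chain_okr _ _ _ _ Hy) | exact Hlt]).
        assert (C01 : comp j x0 x1) by (eapply chain_trans; [exact C0y | apply chain_sym; auto]).
        assert (C10 : comp j x1 x0) by (apply chain_sym; auto).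
        apply subset_eq_compat. f_equal.
        apply functional_extensionality; intro w; apply propositional_extensionality.
        split; intro Hw; eapply chain_trans; eauto.
      + eapply Rle_trans; [| apply (dQ_le G Q pi d dQ HdQ)].
        apply (Hsep j j' E Hcol); [exact (chain_okr _ _ _ _ Hx) | exact (chain_okr _ _ _ _ Hy)]. }
  intros m s Hm Hs.
  set (rho := Rmax r (INR s)).
  assert (Hrho : 0 <= rho) by (eapply Rle_trans; [apply pos_INR | apply Rmax_r]).
  assert (Hsrho : INR s <= rho) by apply Rmax_r.
  assert (Hrrho : r <= rho) by apply Rmax_l.
  assert (Hsp : 0 <= INR s) by apply pos_INR.
  assert (Reach : forall k (p : J) x0,
    (forall y, snd (proj1_sig p) y -> chain (fun z => dQ (pi x0) (pi z) <= B) (fun a b => d a b <= rho) x0 y) ->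
    forall y, Nks d (fun p => snd (proj1_sig p)) (INR s) k p y ->
    chain (fun z => dQ (pi x0) (pi z) <= B + INR k * (INR s + B)) (fun a b => d a b <= rho) x0 y).
  { induction k; intros p x0 H0 y Hy.
    - simpl in Hy. eapply chain_mono; [| | exact (H0 y Hy)]; simpl; intros; [lra| auto].
    - rewrite S_INR. simpl in Hy. destruct Hy as [[[jq A'] [x1 HA']] [Hy [z [a [Hz [Ha Hza]]]]]]. simpl in *. subst A'.
      pose proof (IHk p x0 H0 a Ha) as Ca.
      assert (Ba : dQ (pi x0) (pi a) <= B + INR k * (INR s + B)) by exact (chain_okr _ _ _ _ Ca).
      assert (Baz : dQ (pi a) (pi z) <= INR s).
      { eapply Rle_trans; [apply (dQ_le G Q pi d dQ HdQ)|]. rewrite Hds; exact Hza. }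
      assert (Uz : U jq (pi z)) by exact (chain_okr _ _ _ _ Hz).
      assert (Bw : forall w, U jq (pi w) -> dQ (pi x0) (pi w) <= B + (INR k + 1) * (INR s + B)).
      { intros w Hw. pose proof (HB jq _ _ Uz Hw).
        pose proof (dQ_tri G Q pi d dQ Hpi Hd Hleft HdQ (pi x0) (pi a) (pi w)).
        pose proof (dQ_tri G Q pi d dQ Hpi Hd Hleft HdQ (pi a) (pi z) (pi w)). lra. }
      apply chain_trans with z.
      + eapply chS; [eapply chain_mono; [| | exact Ca] | apply Bw; exact Uz |].
        * intros; lra.
        * auto.
        * simpl. rewrite Hds; lra.
      + eapply chain_mono; [| | exact (chain_trans _ _ _ _ _ (chain_sym _ _ _ _ relsym Hz) Hy)].
        * exact Bw.
        * intros; simpl; lra. }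
  set (D := B + INR m * (INR s + B)).
  assert (HD : 0 <= D) by (unfold D; pose proof (pos_INR m); nra).
  destruct (Hproper (gone G) (2 * (D + 1) + rho)) as [Gl HGl].
  destruct (preimage_list P G i Hiinj Gl) as [W HW].
  assert (HW' : forall p, d (gone G) (i p) <= 2 * (D + 1) + rho -> In p W) by auto.
  destruct (Hproper (gone G) (D + 1)) as [Hb HHb].
  set (Hf := fun g => epsilon (inhabits (gone G)) (fun h => pi h = pi g /\ d (gone G) h <= D + 1)).
  set (Pf := fun g => epsilon (inhabits (gone P)) (fun p => i p = g)).
  set (NN := fun p => Nks d (fun p : J => snd (proj1_sig p)) (INR s) m p).
  apply (HMstab (single_family (fg_subgroup_space i d W))).
  { apply HP. }
  { exact (subfam_metric G d Hd Hdisc Hproper Hleft J NN). }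
  exists (2 * D + 3), (length Hb). intro p.
  destruct (proj2_sig p) as [x0 HA].
  assert (Hbase : forall y, snd (proj1_sig p) y -> chain (fun z => dQ (pi x0) (pi z) <= B) (fun a b => d a b <= rho) x0 y).
  { intros y Hy. rewrite HA in Hy. pose proof (chain_okl _ _ _ _ Hy) as U0.
    eapply chain_mono with (rel := fun a b => d a b < r); [intros z Hz; exact (HB _ _ _ U0 Hz) | intros a b Hab; cbv beta in Hab |- *; lra | exact Hy]. }
  pose proof (Reach m p x0 Hbase) as NR.
  set (F0 := fun y => gmul G (gmul G (ginv G x0) y) (ginv G (Hf (gmul G (ginv G x0) y)))).
  assert (Hspec : forall y, NN p y -> pi (Hf (gmul G (ginv G x0) y)) = pi (gmul G (ginv G x0) y) /\ d (gone G) (Hf (gmul G (ginv G x0) y)) <= D + 1).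
  { intros y Hy. unfold Hf. apply epsilon_spec.
    apply (rep_exists G Q pi d dQ Hpi Hleft HdQ x0 y D). exact (chain_okr _ _ _ _ (NR y Hy)). }
  assert (Pspec : forall y, NN p y -> i (Pf (F0 y)) = F0 y).
  { intros y Hy. unfold Pf. apply epsilon_spec with (P := fun q => i q = F0 y). apply Hexact.
    unfold F0. rewrite Hpi, (homV _ _ _ Hpi), (proj1 (Hspec y Hy)), mulVr. reflexivity. }
  assert (Gen : forall y, NN p y -> gen P W (Pf (F0 y))).
  { intros y Hy. destruct (Hspec y Hy) as [S1 S2].
    exact (rep_gen P G Q i pi d dQ Hi Hpi Hexact Hd Hleft HdQ x0 D rho HD Hrho W HW' y (NR y Hy)
      (Hf (gmul G (ginv G x0) y)) (Pf (F0 y)) S1 S2 (Pspec y Hy)). }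
  exists tt. exists (fun y => exist (fun q => gen P W q) (Pf (F0 (proj1_sig y))) (Gen _ (proj2_sig y))).
  split.
  - intros [y hy] [y' hy']. cbn. rewrite (Pspec y hy), (Pspec y' hy').
    destruct (classic (y = y')) as [E|E].
    + subst y'. rewrite (proj2 (Hd1 _ _) eq_refl), (proj2 (Hd1 y y) eq_refl). lra.
    + pose proof (Hdisc _ _ E). unfold F0. eapply Rle_trans. apply dist_bound; auto.
      rewrite (Hleft (ginv G x0) y y'). destruct (Hspec y hy), (Hspec y' hy'). nra.
  - intros t l Hnd Hall.
    set (phi := fun (y : {x : G | NN p x}) => Hf (gmul G (ginv G x0) (proj1_sig y))).
    eapply Nat.le_trans; [apply Nat.eq_le_incl; symmetry; apply (length_map phi l) |]. apply NoDup_incl_length.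
    + apply NoDup_map_in; auto. intros [a ha] [b hb] Ha Hb' E.
      pose proof (Hall _ Ha) as Ea. pose proof (Hall _ Hb') as Eb. rewrite <- Eb in Ea.
      apply (f_equal (fun q : {q : P | gen P W q} => i (proj1_sig q))) in Ea. cbn in Ea.
      rewrite (Pspec a ha), (Pspec b hb) in Ea. unfold F0 in Ea. unfold phi in E; cbn in E.
      rewrite E in Ea. apply cancel_r, cancel_l in Ea. subst. f_equal; apply proof_irrelevance.
    + intros g Hg. apply in_map_iff in Hg. destruct Hg as [[y hy] [Ey _]]. subst g.
      apply HHb. unfold phi; cbn. apply (Hspec y hy).
Qed.
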